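(* Let $q_1=(1,0,0)$, $q_2=(-1,0,0)$, $q_3=(0,1,0)$, $q_4=(0,-1,0)$, $q_5=(0,0,1)$, $q_6=(0,0,-1)$ be the vertices of a regular octahedron in $\mathbb{R}^3$, let $t\in(0,1)$ and let $q_{j+6}=tq_j$ for $j=1,\dots,6$. Suppose that positive masses $m_1,\dots,m_{12}$ placed at $q_1,\dots,q_{12}$ form a central configuration. Then $m_1=\dots=m_6$ and $m_7=\dots=m_{12}$.
   Context: A configuration $q=(q_1,\dots,q_N)$ of distinct points in $\mathbb{R}^3$ with masses $m_1,\dots,m_N$ is a central configuration if there exists $c\in\mathbb{R}$ such that $\sum_{j\neq i} m_j\left(\frac{1}{|q_j-q_i|^3}-c\right)(q_j-q_i)=0$ for all $i=1,\dots,N$. *)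

(* Defs.v *)
From Stdlib Require Import Reals Lra List.
Import ListNotations.
Open Scope R_scope.

Definition vec3 : Type := (R * R * R)%type.

Definition vx (v : vec3) : R := fst (fst v).
Definition vy (v : vec3) : R := snd (fst v).
Definition vz (v : vec3) : R := snd v.

Definition vsub (u v : vec3) : vec3 := (vx u - vx v, vy u - vy v, vz u - vz v).
Definition vscale (a : R) (v : vec3) : vec3 := (a * vx v, a * vy v, a * vz v).
Definition vnorm (v : vec3) : R := sqrt (vx v ^ 2 + vy v ^ 2 + vz v ^ 2).

Definition vsum_except (N i : nat) (F : nat -> vec3) : vec3 :=
  fold_right (fun j acc =>
      if Nat.eqb j i then acc
      else (vx (F j) + vx acc, vy (F j) + vy acc, vz (F j) + vz acc))
    (0, 0, 0) (seq 0 N).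

Definition central_configuration (N : nat) (q : nat -> vec3) (m : nat -> R) : Prop :=
  (forall i j, (i < N)%nat -> (j < N)%nat -> i <> j -> q i <> q j) /\
  exists c : R, forall i, (i < N)%nat ->
    vsum_except N i (fun j =>
      vscale (m j * (1 / (vnorm (vsub (q j) (q i))) ^ 3 - c)) (vsub (q j) (q i)))
    = (0, 0, 0).

(* Octahedron vertices q_1..q_6 (stored at indices 0..5) and the scaled
   copies q_{j+6} = t q_j (indices 6..11). *)
Definition octa (j : nat) : vec3 :=
  match j with
  | 0 => (1, 0, 0)
  | 1 => (-1, 0, 0)
  | 2 => (0, 1, 0)
  | 3 => (0, -1, 0)
  | 4 => (0, 0, 1)
  | _ => (0, 0, -1)
  end.

Definition two_octa (t : R) (k : nat) : vec3 :=
  if Nat.ltb k 6 then octa k else vscale t (octa (k - 6)).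

(* Main.v *)
Require Import Defs.
From Stdlib Require Import Reals Lra Lia.
Open Scope R_scope.

Lemma inv3_lt a b : 0 < a -> a < b -> 1/(b*(b*(b*1))) < 1/(a*(a*(a*1))).
Proof. intros. unfold Rdiv. rewrite !Rmult_1_l. apply Rinv_lt_contravar.
 assert (0 < a*(a*(a*1))) by (apply Rmult_lt_0_compat; nra).
 assert (0 < b*(b*(b*1))) by (apply Rmult_lt_0_compat; nra). nra.
 assert (0 < b*b+a*b+a*a) by nra.
 assert (0 < (b-a)*(b*b+a*b+a*a)) by (apply Rmult_lt_0_compat; lra). nra. Qed.

Lemma Kmul r : 0 < r -> r * (1/(r*(r*(r*1)))) = 1/(r*r).
Proof. intros. field. lra. Qed.

Lemma sq_eq E v : 0 <= v -> E = v*v -> sqrt E = v.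
Proof. intros H1 ->. apply sqrt_square; auto. Qed.

Lemma pair_zero x y p1 p2 q1 q2 : 0 < p1 -> 0 < p2 -> 0 < q1 -> 0 < q2 ->
  p1*x + p2*y = 0 -> q1*x - q2*y = 0 -> x = 0 /\ y = 0.
Proof.
  intros.
  assert (Hy : (q1*p2 + q2*p1) * y = 0) by nra.
  assert (q1*p2 + q2*p1 <> 0) by nra.
  assert (y = 0).
  { destruct (Rmult_integral _ _ Hy); [contradiction|assumption]. }
  subst y. split; [|reflexivity].
  assert (p1 * x = 0) by lra.
  destruct (Rmult_integral _ _ H6); [lra|assumption].
Qed.

Lemma sumQ t : 0 < t < 1 -> 1/((1-t)*(1-t)) + 1/((1+t)*(1+t)) >= 2.
Proof.
  intros Ht.
  set (u := 1/(1-t)). set (v := 1/(1+t)).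
  assert (Hu : u*(1-t) = 1) by (unfold u; field; lra).
  assert (Hv : v*(1+t) = 1) by (unfold v; field; lra).
  replace (1/((1-t)*(1-t))) with (u*u) by (unfold u; field; lra).
  replace (1/((1+t)*(1+t))) with (v*v) by (unfold v; field; lra).
  assert (0 < u) by (unfold u; apply Rdiv_lt_0_compat; lra).
  assert (0 < v) by (unfold v; apply Rdiv_lt_0_compat; lra).
  (* u + v >= 2 : since 1/u + 1/v = 2 *)
  assert (Huv : u + v >= 2).
  { assert (u*v*((1-t)+(1+t)) = u + v) by nra. nra. }
  nra.
Qed.

Tactic Notation "getEq" constr(Heq) constr(i) ident(X) ident(Y) ident(Z) constr(t) constr(w) constr(s) constr(Hw) constr(Hs) :=
  let H := fresh in
  assert (H := Heq i ltac:(lia));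
  cbv [vsum_except List.seq List.fold_right Nat.eqb two_octa Nat.ltb Nat.leb octa vscale vsub vx vy vz vnorm fst snd Nat.sub] in H;
  repeat match type of H with context [sqrt ?E] =>
  first [ rewrite (sq_eq E 2) in H by (lra || ring)
        | rewrite (sq_eq E w) in H by (lra || (rewrite Hw; ring))
        | rewrite (sq_eq E s) in H by (lra || (rewrite Hs; ring))
        | rewrite (sq_eq E (1-t)) in H by (lra || ring)
        | rewrite (sq_eq E (1+t)) in H by (lra || ring)
        | rewrite (sq_eq E (2*t)) in H by (lra || ring)
        | rewrite (sq_eq E (t*w)) in H by (nra || (replace (t*w*(t*w)) with (t*t*(w*w)) by ring; rewrite Hw; ring))
        ] end;
  injection H as X Y Z.

Theorem theorem8 (t : R) (m : nat -> R) :
  0 < t < 1 ->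
  (forall k, (k < 12)%nat -> 0 < m k) ->
  central_configuration 12 (two_octa t) m ->
  (forall k, (k < 6)%nat -> m k = m 0%nat) /\
  (forall k, (6 <= k < 12)%nat -> m k = m 6%nat).
Proof.
  intros Ht _ [_ [c Heq]].
  assert (Hw : sqrt 2 * sqrt 2 = 2) by (apply sqrt_sqrt; lra).
  assert (Hw0 : 0 < sqrt 2) by (apply sqrt_lt_R0; lra).
  assert (Hs : sqrt (1+t^2) * sqrt (1+t^2) = 1+t^2) by (apply sqrt_sqrt; nra).
  assert (Hs0 : 0 < sqrt (1+t^2)) by (apply sqrt_lt_R0; nra).
  set (w := sqrt 2) in *. set (s := sqrt (1+t^2)) in *. clearbody w s.
  getEq Heq 0%nat X0 Y0 Z0 t w s Hw Hs.
  getEq Heq 2%nat X2 Y2 Z2 t w s Hw Hs.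
  getEq Heq 4%nat X4 Y4 Z4 t w s Hw Hs.
  getEq Heq 6%nat X6 Y6 Z6 t w s Hw Hs.
  getEq Heq 7%nat X7 Y7 Z7 t w s Hw Hs.
  getEq Heq 8%nat X8 Y8 Z8 t w s Hw Hs.
  getEq Heq 9%nat X9 Y9 Z9 t w s Hw Hs.
  getEq Heq 10%nat X10 Y10 Z10 t w s Hw Hs.
  getEq Heq 11%nat X11 Y11 Z11 t w s Hw Hs.
  clear Heq.
  assert (F1 : 1/(w*(w*(w*1))) < 1/(s*(s*(s*1)))) by (apply inv3_lt; nra).
  assert (F2 : 1/(s*(s*(s*1))) < 1/((t*w)*((t*w)*((t*w)*1)))) by (apply inv3_lt; nra).
  assert (F3 : 1/((2*t)*((2*t)*((2*t)*1))) < 1/((t*w)*((t*w)*((t*w)*1)))) by (apply inv3_lt; nra).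
  assert (F4 : 1/(2*(2*(2*1))) < 1/(w*(w*(w*1)))) by (apply inv3_lt; nra).
  assert (Ks1 : 1/(s*(s*(s*1))) < 1).
  { assert (H1 := inv3_lt 1 s ltac:(lra) ltac:(nra)). replace (1/(1*(1*(1*1)))) with 1 in H1 by field. exact H1. }
  assert (Ks0 : 0 < 1/(s*(s*(s*1)))) by (apply Rdiv_lt_0_compat; [lra| apply Rmult_lt_0_compat; nra]).
  assert (Hm := Kmul (1-t) ltac:(lra)). assert (Hp := Kmul (1+t) ltac:(lra)).
  assert (HQ := sumQ t Ht).
  assert (Hlt : 1/((1+t)*(1+t)) < 1/((1-t)*(1-t))).
  { unfold Rdiv; rewrite !Rmult_1_l; apply Rinv_lt_contravar.
    apply Rmult_lt_0_compat; apply Rmult_lt_0_compat; lra. nra. }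
  set (k2 := 1/(2*(2*(2*1)))) in *.
  set (kw := 1/(w*(w*(w*1)))) in *.
  set (ks := 1/(s*(s*(s*1)))) in *.
  set (kt := 1/((t*w)*((t*w)*((t*w)*1)))) in *.
  set (k2t := 1/((2*t)*((2*t)*((2*t)*1)))) in *.
  set (k1m := 1/((1-t)*((1-t)*((1-t)*1)))) in *.
  set (k1p := 1/((1+t)*((1+t)*((1+t)*1)))) in *.
  set (u1 := 1/((1-t)*(1-t))) in *. set (u2 := 1/((1+t)*(1+t))) in *.
  clearbody k2 kw ks kt k2t k1m k1p u1 u2.
  assert (F5 : 0 < (1-t)*k1m + (1+t)*k1p - 2*ks) by lra.
  assert (F6 : 0 < (1-t)*k1m - (1+t)*k1p + 2*t*ks) by nra.
  assert (P2 : 0 < 2*t*(kt - k2t)) by nra.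
  assert (P3 : 0 < t*(kt - ks)) by nra.
  destruct (pair_zero (m 0%nat - m 1%nat) (m 6%nat - m 7%nat) (ks - kw) (t*(kt-ks))
     ((1-t)*k1m + (1+t)*k1p - 2*ks) (2*t*(kt - k2t))) as [A1 B1]; try lra.
  destruct (pair_zero (m 2%nat - m 3%nat) (m 8%nat - m 9%nat) (ks - kw) (t*(kt-ks))
     ((1-t)*k1m + (1+t)*k1p - 2*ks) (2*t*(kt - k2t))) as [A2 B2]; try lra.
  destruct (pair_zero (m 4%nat - m 5%nat) (m 10%nat - m 11%nat) (ks - kw) (t*(kt-ks))
     ((1-t)*k1m + (1+t)*k1p - 2*ks) (2*t*(kt - k2t))) as [A3 B3]; try lra.
  assert (E1 : m 1%nat = m 0%nat) by lra. assert (E7 : m 7%nat = m 6%nat) by lra.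
  assert (E3 : m 3%nat = m 2%nat) by lra. assert (E9 : m 9%nat = m 8%nat) by lra.
  assert (E5 : m 5%nat = m 4%nat) by lra. assert (E11 : m 11%nat = m 10%nat) by lra.
  rewrite ?E1, ?E7, ?E3, ?E9, ?E5, ?E11 in *.
  assert (P4 : 0 < 2*(kw - k2)) by lra.
  destruct (pair_zero (m 0%nat - m 2%nat) (m 6%nat - m 8%nat)
     ((1-t)*k1m - (1+t)*k1p + 2*t*ks) (2*t*(kt - k2t)) (2*(kw-k2))
     ((1-t)*k1m + (1+t)*k1p - 2*ks)) as [C1 D1]; try lra.
  destruct (pair_zero (m 0%nat - m 4%nat) (m 6%nat - m 10%nat)
     ((1-t)*k1m - (1+t)*k1p + 2*t*ks) (2*t*(kt - k2t)) (2*(kw-k2))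
     ((1-t)*k1m + (1+t)*k1p - 2*ks)) as [C2 D2]; try lra.
  split; intros k Hk.
  - do 6 (destruct k as [|k]; [lra|]); lia.
  - do 6 (destruct k as [|k]; [lia|]).
    do 6 (destruct k as [|k]; [lra|]); lia.
Qed.
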